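(* Let $C$ be an open cone. A sequence in $C$ is an almost-geodesic for the Hilbert function $H_C$ if and only if it is an almost-geodesic both for the Funk function $F_C$ and for the reverse Funk function $RF_C$.
   Context: $V$ is a finite-dimensional real vector space. An open cone is a nonempty open convex set $C\subset V$ with $\lambda C\subseteq C$ for all $\lambda>0$ and $0\notin C$. Write $x\le_C y$ iff $y-x\in\overline C$; $M_C(y/x):=\inf\{\lambda>0:y\le_C\lambda x\}$; $F_C(y,x):=\log M_C(y/x)$; $RF_C(x,y):=F_C(y,x)$; $H_C(x,y):=F_C(x,y)+F_C(y,x)$ for $x,y\in C$ (these satisfy the triangle inequality). For $d\in\{F_C,RF_C,H_C\}$, an almost-geodesic is a sequence $(x_l)_{l\in\mathbb N}$ in $C$ such that for some $\epsilon>0$, $\sum_{i=1}^l d(x_{i-1},x_i)\le d(x_0,x_l)+\epsilon$ for all $l\ge1$. *)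

(* Defs.v *)
From HB Require Import structures.
From mathcomp Require Import all_boot all_order all_algebra.
From mathcomp Require Import all_classical all_reals all_analysis.
Set Implicit Arguments. Unset Strict Implicit. Unset Printing Implicit Defensive.
Import Order.TTheory GRing.Theory Num.Theory.
Import numFieldNormedType.Exports.
Local Open Scope classical_set_scope.
Local Open Scope ring_scope.

Definition open_cone (R : realType) (n : nat) (C : set 'rV[R]_n) : Prop :=
  [/\ C !=set0, open C,
      (forall x y (t : R), C x -> C y -> 0 <= t <= 1 -> C (t *: x + (1 - t) *: y)),
      (forall (l : R) x, 0 < l -> C x -> C (l *: x)) &
      ~ C 0].

(* M_C(y/x) := inf { l > 0 : y <=_C l x }, where y <=_C z iff z - y in closure C *)
Definition McC (R : realType) (n : nat) (C : set 'rV[R]_n) (y x : 'rV[R]_n) : R :=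
  inf [set l : R | 0 < l /\ closure C (l *: x - y)].

Definition FunkC (R : realType) (n : nat) (C : set 'rV[R]_n) (y x : 'rV[R]_n) : R :=
  ln (McC C y x).

Definition RFunkC (R : realType) (n : nat) (C : set 'rV[R]_n) (x y : 'rV[R]_n) : R :=
  FunkC C y x.

Definition HilbertC (R : realType) (n : nat) (C : set 'rV[R]_n) (x y : 'rV[R]_n) : R :=
  FunkC C x y + FunkC C y x.

Definition almost_geodesic (R : realType) (n : nat) (C : set 'rV[R]_n)
    (d : 'rV[R]_n -> 'rV[R]_n -> R) (x : nat -> 'rV[R]_n) : Prop :=
  (forall l, C (x l)) /\
  exists eps : R, 0 < eps /\
    forall l : nat, (1 <= l)%N ->
      \sum_(1 <= i < l.+1) d (x i.-1) (x i) <= d (x 0%N) (x l) + eps.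

(* Main.v *)
Require Import Defs.
From mathcomp Require Import all_boot all_order all_algebra.
From mathcomp Require Import all_classical all_reals all_analysis.
From mathcomp Require Import ring lra.
Import Order.TTheory GRing.Theory Num.Theory.
Import numFieldNormedType.Exports.
Local Open Scope classical_set_scope.
Local Open Scope ring_scope.
Set Implicit Arguments. Unset Strict Implicit.

Section H.
Variables (R : realType) (V : normedModType R).

Lemma openP (A : set V) x : open A -> A x ->
  exists2 r : R, 0 < r & forall y, `|x - y| < r -> A y.
Proof.
move=> oA Ax.
have /nbhs_ex [d Hd] : nbhs x A by rewrite openE in oA; exact: oA.
exists d%:num => // y xy; apply: Hd; by rewrite -ball_normE.
Qed.

Lemma clP (A : set V) z : closure A z -> forall e : R, 0 < e ->
  exists c, A c /\ `|z - c| < e.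
Proof.
move=> cz e e0; have [c [Ac bc]] := cz _ (nbhsx_ballx z _ e0).
by exists c; split => //; move: bc; rewrite -ball_normE.
Qed.

Lemma clI (A : set V) z : (forall e : R, 0 < e -> exists c, A c /\ `|z - c| < e) ->
  closure A z.
Proof.
move=> H B /nbhs_ballP [e /= e0 Be].
have [c [Ac zc]] := H e e0; exists c; split => //; apply: Be.
by rewrite -ball_normE.
Qed.

Variables (C : set V) (hO : open C)
  (hconv : forall x y (t : R), C x -> C y -> 0 <= t <= 1 -> C (t *: x + (1 - t) *: y))
  (hscal : forall (l : R) x, 0 < l -> C x -> C (l *: x)) (h0 : ~ C 0).

Lemma addC a b : C a -> C b -> C (a + b).
Proof.
move=> Ca Cb.
have -> : a + b = 2 *: (2^-1 *: a + (1 - 2^-1) *: b).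
  have -> : (1 - 2^-1 : R) = 2^-1 by field.
  by rewrite scalerDr !scalerA mulfV ?pnatr_eq0 // !scale1r.
apply: hscal => //; apply: hconv => //.
by rewrite invr_ge0 ler0n /= invf_le1 ?ler1n.
Qed.

Lemma cl_comb (a : R) u v : 0 < a -> closure C u -> closure C v ->
  closure C (a *: u + v).
Proof.
move=> a0 cu cv; apply: clI => e e0.
have h1 : 0 < e / (2 * a) by rewrite divr_gt0 // mulr_gt0.
have h2 : 0 < e / 2 by rewrite divr_gt0.
have [u' [Cu' uu']] := clP cu h1.
have [v' [Cv' vv']] := clP cv h2.
exists (a *: u' + v'); split; first by apply: addC => //; apply: hscal.
have -> : a *: u + v - (a *: u' + v') = a *: (u - u') + (v - v').
  by rewrite scalerBr opprD addrACA.
apply: (le_lt_trans (ler_normD _ _)).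
rewrite normrZ gtr0_norm //.
have -> : e = a * (e / (2 * a)) + e / 2 by field; rewrite gt_eqF.
apply: ltrD => //; by rewrite ltr_pM2l.
Qed.

Definition Ms (y x : V) := [set l : R | 0 < l /\ closure C (l *: x - y)].

Lemma Ms_mul z y x a b : Ms z y a -> Ms y x b -> Ms z x (a * b).
Proof.
move=> [a0 ca] [b0 cb]; split; first exact: mulr_gt0.
have -> : (a * b) *: x - z = a *: (b *: x - y) + (a *: y - z).
  by rewrite scalerBr scalerA addrA subrK.
exact: cl_comb.
Qed.

Lemma Ms_ne y x : C x -> Ms y x !=set0.
Proof.
move=> Cx; have [r r0 Hr] := openP hO Cx.
set L := (`|y| + r) / r.
have L0 : 0 < L by rewrite divr_gt0 // ltr_pwDr.
exists L; split => //; apply: subset_closure.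
have -> : L *: x - y = L *: (x - L^-1 *: y).
  by rewrite scalerBr scalerA mulfV ?gt_eqF // scale1r.
apply: hscal => //; apply: Hr.
rewrite opprB addrC subrK normrZ gtr0_norm ?invr_gt0 //.
rewrite /L invf_div mulrAC ltr_pdivrMr; last by rewrite ltr_pwDr.
have := normr_ge0 y; nra.
Qed.

Lemma Ms_lb y x : C x -> C y -> exists2 c : R, 0 < c & forall l, Ms y x l -> c <= l.
Proof.
move=> Cx Cy; have [r r0 Hr] := openP hO Cy.
set c := r / (2 * (`|x| + 1)).
have c0 : 0 < c by rewrite divr_gt0 // mulr_gt0 // ltr_pwDr.
exists c => // l [l0 cl]; rewrite leNgt; apply/negP => lc.
have h2 : 0 < r / 2 by rewrite divr_gt0.
have [d [Cd wd]] := clP cl h2.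
have hlx : `|l *: x| < r / 2.
  rewrite normrZ gtr0_norm //.
  apply: (le_lt_trans (y := c * `|x|)); first by apply: ler_wpM2r; [exact: normr_ge0 | exact: ltW].
  rewrite /c mulrAC ltr_pdivrMr; last by have := normr_ge0 x; nra.
  have -> : r / 2 * (2 * (`|x| + 1)) = r * (`|x| + 1) by field.
  have := normr_ge0 x; nra.
have Cmd : C (- d).
  apply: Hr; rewrite opprK.
  have -> : y + d = (d - (l *: x - y)) + l *: x by rewrite opprB -addrA subrK addrC.
  apply: (le_lt_trans (ler_normD _ _)).
  have -> : r = r / 2 + r / 2 by field.
  by apply: ltrD => //; rewrite distrC.
apply: h0.
have -> : (0 : V) = 2^-1 *: d + (1 - 2^-1) *: (- d).
  have -> : (1 - 2^-1 : R) = 2^-1 by field.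
  by rewrite scalerN subrr.
apply: hconv => //.
by rewrite invr_ge0 ler0n /= invf_le1 ?ler1n.
Qed.

Lemma Ms_hlb y x : has_lbound (Ms y x).
Proof. by exists 0 => l [l0 _]; exact: ltW. Qed.

Lemma M_pos y x : C x -> C y -> 0 < inf (Ms y x).
Proof.
move=> Cx Cy; have [c c0 H] := Ms_lb Cx Cy.
apply: (lt_le_trans c0); apply: lb_le_inf; first exact: Ms_ne.
by move=> l Hl; exact: H.
Qed.

Lemma M_tri z y x : C x -> C y -> C z ->
  inf (Ms z x) <= inf (Ms z y) * inf (Ms y x).
Proof.
move=> Cx Cy Cz.
have P0 := M_pos Cy Cz.
have H1 : forall b, Ms y x b -> inf (Ms z x) / inf (Ms z y) <= b.
  move=> b Hb; have b0 : 0 < b by case: Hb.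
  have : inf (Ms z x) / b <= inf (Ms z y).
    apply: lb_le_inf; first exact: Ms_ne.
    move=> a Ha; rewrite ler_pdivrMr //.
    exact: (ge_inf (Ms_hlb z x) (Ms_mul Ha Hb)).
  by rewrite ler_pdivrMr // mulrC -ler_pdivrMr.
have : inf (Ms z x) / inf (Ms z y) <= inf (Ms y x).
  apply: lb_le_inf; first exact: Ms_ne.
  by move=> b Hb; exact: H1.
by rewrite ler_pdivrMr // mulrC.
Qed.

Lemma ln_tri z y x : C x -> C y -> C z ->
  ln (inf (Ms z x)) <= ln (inf (Ms z y)) + ln (inf (Ms y x)).
Proof.
move=> Cx Cy Cz.
have h1 := M_pos Cx Cz. have h2 := M_pos Cy Cz. have h3 := M_pos Cx Cy.
rewrite -lnM ?posrE // ler_ln ?posrE ?mulr_gt0 //.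
exact: M_tri.
Qed.
End H.

Local Open Scope classical_set_scope.
Local Open Scope ring_scope.

Lemma sum_tri (R : realType) (T : Type) (P : T -> Prop) (d : T -> T -> R)
  (x : nat -> T) : (forall l, P (x l)) ->
  (forall a b c, P a -> P b -> P c -> d a c <= d a b + d b c) ->
  forall l, (1 <= l)%N -> d (x 0%N) (x l) <= \sum_(1 <= i < l.+1) d (x i.-1) (x i).
Proof.
move=> Px tri; elim=> [//|l IH] _.
case: l IH => [_|l IH]; first by rewrite big_nat1.
rewrite big_nat_recr //=.
apply: (le_trans (tri _ (x l.+1) _ (Px _) (Px _) (Px _))).
by rewrite lerD2r; apply: IH.
Qed.

Lemma arith1 (R : realType) (a b A B e : R) : a + b <= A + B + e -> B <= b -> a <= A + e.
Proof. lra. Qed.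
Lemma arith1' (R : realType) (a b A B e : R) : a + b <= A + B + e -> A <= a -> b <= B + e.
Proof. lra. Qed.
Lemma arith2 (R : realType) (a b A B e1 e2 : R) : a <= A + e1 -> b <= B + e2 ->
  a + b <= A + B + (e1 + e2).
Proof. lra. Qed.

Theorem mainTheorem11 (R : realType) (n : nat) (C : set 'rV[R]_n)
  (hC : open_cone C) (x : nat -> 'rV[R]_n) :
  almost_geodesic C (HilbertC C) x <->
  (almost_geodesic C (FunkC C) x /\ almost_geodesic C (RFunkC C) x).
Proof.
case: hC => _ hO hconv hscal h0.
have triF : forall a b c, C a -> C b -> C c -> FunkC C a c <= FunkC C a b + FunkC C b c.
  by move=> a b c Ca Cb Cc; exact: (ln_tri hO hconv hscal h0 Cc Cb Ca).
have triR : forall a b c, C a -> C b -> C c -> RFunkC C a c <= RFunkC C a b + RFunkC C b c.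
  move=> a b c Ca Cb Cc; rewrite /RFunkC addrC; exact: (triF _ _ _ Cc Cb Ca).
have splitH : forall l, \sum_(1 <= i < l.+1) HilbertC C (x i.-1) (x i) =
   \sum_(1 <= i < l.+1) FunkC C (x i.-1) (x i) + \sum_(1 <= i < l.+1) RFunkC C (x i.-1) (x i).
  by move=> l; rewrite -big_split.
split.
- move=> [Cx [e [e0 He]]].
  have sF := sum_tri Cx triF. have sR := sum_tri Cx triR.
  split; split=> //; exists e; split=> // l l1; have := He l l1;
    rewrite splitH /HilbertC.
  + move=> h; apply: (arith1 h); exact: sR.
  + move=> h; apply: (arith1' h); exact: sF.
- move=> [[Cx [e1 [e10 H1]]] [_ [e2 [e20 H2]]]].
  split=> //; exists (e1 + e2); split; first by rewrite addr_gt0.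
  move=> l l1; rewrite splitH /HilbertC.
  exact: (arith2 (H1 l l1) (H2 l l1)).
Qed.
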